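(* Let $(X,\|\cdot\|_X)$ be a normed linear space. The following are equivalent: (i) $\Delta_X^{(c)}(R)<\infty$ for some $R\in(0,\infty)$; (ii) there is $C\in[0,\infty)$ such that $\Delta_X^{(c)}(R)\leq CR$ for all $R\in[0,\infty)$; (iii) $\Delta_X^{(c)}(R)<\infty$ for all $R\in[0,\infty)$ (the coarse Stone property); (iv) $\Delta_X^{(u)}(r)>0$ for all $r>0$ (the uniform Stone property).
   Context: For a cover $\mathcal{U}$ of $X$: $\mathrm{diam}(\mathcal{U})=\sup_{U\in\mathcal{U}}\mathrm{diam}(U)$; $\mathcal{L}(\mathcal{U})=\sup\{d\in[0,\infty): \text{every } E\subseteq X \text{ with } \mathrm{diam}(E)<d \text{ is contained in some } U\in\mathcal{U}\}$; point-finite means each point lies in only finitely many members. $\Delta_X^{(u)}(r)=\sup\{\mathcal{L}(\mathcal{U}): \mathcal{U} \text{ point-finite cover of } X,\ \mathrm{diam}(\mathcal{U})\leq r\}$, $\Delta_X^{(c)}(R)=\inf\{\mathrm{diam}(\mathcal{U}): \mathcal{U} \text{ point-finite cover of } X,\ \mathcal{L}(\mathcal{U})\geq R\}$. *)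

(* Defs.v *)
From mathcomp Require Import all_boot all_order all_algebra.
From mathcomp Require Import all_classical all_reals all_analysis.
Set Implicit Arguments. Unset Strict Implicit. Unset Printing Implicit Defensive.
Import Order.TTheory GRing.Theory Num.Theory.
Import numFieldNormedType.Exports.
Local Open Scope classical_set_scope.
Local Open Scope ring_scope.

Section StoneDefs.
Variables (R : realType) (X : normedModType R).

(* diameter of a subset, in [0, +oo]; convention diam set0 = 0 *)
Definition diam (E : set X) : \bar R :=
  ereal_sup ([set 0%E] `|` [set z | exists x y, E x /\ E y /\ z = (`|x - y|)%:E]).

Definition is_cover (U : set (set X)) : Prop :=
  forall x : X, exists A, U A /\ A x.

Definition point_finite (U : set (set X)) : Prop :=
  forall x : X, finite_set [set A | U A /\ A x].

Definition cover_diam (U : set (set X)) : \bar R :=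
  ereal_sup [set diam A | A in U].

Definition lebesgue_number (U : set (set X)) : \bar R :=
  ereal_sup [set d%:E | d in [set d : R | 0 <= d /\
     forall E : set X, (diam E < d%:E)%E -> exists A, U A /\ E `<=` A]].

Definition Delta_u (r : R) : \bar R :=
  ereal_sup [set lebesgue_number U | U in [set U | is_cover U /\ point_finite U
                                          /\ (cover_diam U <= r%:E)%E]].

Definition Delta_c (Rr : R) : \bar R :=
  ereal_inf [set cover_diam U | U in [set U | is_cover U /\ point_finite U
                                          /\ (Rr%:E <= lebesgue_number U)%E]].
End StoneDefs.

(* Main.v *)
Require Import Defs.
From mathcomp Require Import all_boot all_order all_algebra.
From mathcomp Require Import all_classical all_reals all_analysis.
From mathcomp Require Import ring lra.
Import Order.TTheory GRing.Theory Num.Theory.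
Import numFieldNormedType.Exports.
Local Open Scope classical_set_scope.
Local Open Scope ring_scope.

Section Helpers.
Context {R : realType} {X : normedModType R}.
Local Notation diamX := (@diam R X).
Local Notation cdiamX := (@cover_diam R X).
Local Notation lebX := (@lebesgue_number R X).

Definition goodL (U : set (set X)) (d : R) := 0 <= d /\
  forall E : set X, (diamX E < d%:E)%E -> exists A, U A /\ E `<=` A.
Definition sc (s : R) (E : set X) : set X := fun x => E (s *: x).
Definition scU (t : R) (U : set (set X)) := [set sc t^-1 A | A in U].

Lemma diam_ge0 E : (0 <= diamX E)%E.
Proof. by apply: ereal_sup_ubound; left. Qed.

Lemma diam_ub {E} {x y} : E x -> E y -> ((`|x - y|)%:E <= diamX E)%E.
Proof. by move=> Ex Ey; apply: ereal_sup_ubound; right; exists x, y. Qed.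

Lemma diam_le E (c : R) : 0 <= c -> (forall x y, E x -> E y -> `|x - y| <= c) ->
  (diamX E <= c%:E)%E.
Proof.
move=> c0 H; apply: ge_ereal_sup => z [->|[x [y [Ex [Ey ->]]]]]; rewrite lee_fin //.
exact: H.
Qed.

Lemma diam_sc {E} {c s : R} : 0 < s -> (diamX E <= c%:E)%E ->
  (diamX (sc s E) <= (s^-1 * c)%:E)%E.
Proof.
move=> s0 h.
have c0 : 0 <= c by rewrite -lee_fin; exact: le_trans (diam_ge0 E) h.
apply: diam_le; first by rewrite mulr_ge0 // invr_ge0 ltW.
move=> x y Ex Ey; have := le_trans (@diam_ub E (s *: x) (s *: y) Ex Ey) h.
rewrite lee_fin -scalerBr normrZ gtr0_norm // => H.
by rewrite ler_pdivlMl.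
Qed.

Lemma diam_fin E : (diamX E < +oo)%E -> exists c, diamX E = c%:E /\ 0 <= c.
Proof.
move: (diam_ge0 E); case: (diamX E) => [c||] //= c0 _.
by exists c; split => //; rewrite -lee_fin.
Qed.

Lemma goodL0 U : goodL U 0.
Proof.
split => // E H; exfalso; move: H; rewrite ltNge; by rewrite diam_ge0.
Qed.

Lemma goodL_down {U} {d l : R} : goodL U d -> 0 <= l <= d -> goodL U l.
Proof.
move=> [_ H] /andP[l0 ld]; split => // E HE; apply: H.
by apply: lt_le_trans HE _; rewrite lee_fin.
Qed.

Lemma leb_gt {U} {x : R} : (x%:E < lebX U)%E -> exists d, goodL U d /\ x < d.
Proof.
move/ereal_sup_gt => [y [d gd <-]]; rewrite lte_fin => xd.
by exists d; split.
Qed.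

Lemma leb_ge {U} {x l : R} : (x%:E <= lebX U)%E -> 0 <= l < x -> goodL U l.
Proof.
move=> H /andP[l0 lx].
have [d [gd ld]] : exists d, goodL U d /\ l < d.
  by apply: leb_gt; apply: lt_le_trans H; rewrite lte_fin.
by apply: goodL_down gd _; rewrite l0 ltW.
Qed.

Lemma leb_ub {U} {l : R} : goodL U l -> (l%:E <= lebX U)%E.
Proof. by move=> g; apply: ereal_sup_ubound; exists l. Qed.

Lemma leb_of {U} {x : R} : (forall l, 0 <= l < x -> goodL U l) -> (x%:E <= lebX U)%E.
Proof.
move=> H.
have L0 := leb_ub (goodL0 U).
have [x0|x0] := leP x 0.
  by apply: le_trans L0; rewrite lee_fin.
rewrite leNgt; apply/negP => Hlt.
have ub := @leb_ub U.
move: ub Hlt L0; case: (lebX U) => [y||] //= ub Hlt L0.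
rewrite lte_fin in Hlt; rewrite lee_fin in L0.
have g : goodL U ((y + x) / 2) by apply: H; apply/andP; split; lra.
have := ub _ g; rewrite lee_fin; lra.
Qed.

Lemma goodL_sc {U} {d t : R} : 0 < t -> goodL U d -> goodL (scU t U) (t * d).
Proof.
move=> t0 [d0 H]; split; first by rewrite mulr_ge0 // ltW.
move=> E HE.
have [c [dc c0]] := @diam_fin E (lt_trans HE (ltry _)).
have h1 := @diam_sc E c t t0 (ltac:(by rewrite dc)).
have h2 : (diamX (sc t E) < d%:E)%E.
  apply: le_lt_trans h1 _; rewrite lte_fin ltr_pdivrMl //.
  by rewrite dc lte_fin in HE.
have [A [UA sA]] := H _ h2.
exists (sc t^-1 A); split; first by exists A.
move=> x Ex; rewrite /sc; apply: sA; rewrite /sc scalerA mulrV ?scale1r //.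
by rewrite unitfE gt_eqF.
Qed.

Lemma cover_sc U (t : R) : 0 < t -> is_cover U -> is_cover (scU t U).
Proof.
move=> t0 cU x; have [A [UA Ax]] := cU (t^-1 *: x).
by exists (sc t^-1 A); split => //; exists A.
Qed.

Lemma pf_sc U (t : R) : point_finite U -> point_finite (scU t U).
Proof.
move=> pU x; apply: (@sub_finite_set _ _ (sc t^-1 @` [set A | U A /\ A (t^-1 *: x)])).
  move=> B [[A UA <-] Bx]; by exists A.
exact/finite_image/pU.
Qed.

Lemma cdiam_sc {U} {t D : R} : 0 < t -> (cdiamX U <= D%:E)%E ->
  (cdiamX (scU t U) <= (t * D)%:E)%E.
Proof.
move=> t0 H; apply: ge_ereal_sup => z [B [A UA <-] <-].
have := @diam_sc A D t^-1; rewrite invrK; apply; first by rewrite invr_gt0.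
by apply: le_trans H; apply: ereal_sup_ubound; exists A.
Qed.

Lemma Dc_le Rr U : is_cover U -> point_finite U -> (Rr%:E <= lebX U)%E ->
  (Delta_c X Rr <= cdiamX U)%E.
Proof. by move=> c p l; apply: ereal_inf_lbound; exists U. Qed.

Lemma Dc_lt {Rr} : (Delta_c X Rr < +oo)%E -> exists U, [/\ is_cover U, point_finite U,
  (Rr%:E <= lebX U)%E & exists D, 0 <= D /\ (cdiamX U <= D%:E)%E].
Proof.
move/ereal_inf_lt => [y [U [c [p l]] <-] H]; exists U; split => //.
move: H; case: (cdiamX U) => [e||] // _.
  by exists `|e|; split => //; rewrite lee_fin ler_norm.
by exists 0; split => //; rewrite leNye.
Qed.

Lemma Du_gt {r} : (0 < Delta_u X r)%E -> exists U, [/\ is_cover U, point_finite U,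
  (cdiamX U <= r%:E)%E & (0 < lebX U)%E].
Proof.
by move/ereal_sup_gt => [y [U [c [p l]] <-] H]; exists U; split.
Qed.

Lemma Du_ge r U : is_cover U -> point_finite U -> (cdiamX U <= r%:E)%E ->
  (lebX U <= Delta_u X r)%E.
Proof. by move=> c p l; apply: ereal_sup_ubound; exists U. Qed.

Lemma Dc0 : (Delta_c X 0 <= 0%:E)%E.
Proof.
pose U := [set A : set X | exists x, A = [set x]].
apply: le_trans (@Dc_le _ (U) _ _ _) _.
- by move=> x; exists [set x]; split => //; exists x.
- move=> x; apply: (@sub_finite_set _ _ [set [set x]]); last exact: finite_set1.
  by move=> A [[y ->] /= <-].
- by apply: leb_of => l /andP[a b]; exfalso; lra.
- apply: ge_ereal_sup => z [A [y ->] <-]; apply: diam_le => // a b -> ->.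
  by rewrite subrr normr0.
Qed.

End Helpers.

Theorem lemma3p7 (R : realType) (X : normedModType R) :
  let i   := exists Rr : R, 0 < Rr /\ (Delta_c X Rr < +oo)%E in
  let ii  := exists C : R, 0 <= C /\
               forall Rr : R, 0 <= Rr -> (Delta_c X Rr <= (C * Rr)%:E)%E in
  let iii := forall Rr : R, 0 <= Rr -> (Delta_c X Rr < +oo)%E in
  let iv  := forall r : R, 0 < r -> (0 < Delta_u X r)%E in
  [/\ (i <-> ii), (ii <-> iii) & (iii <-> iv)].
Proof.
move=> i ii iii iv.
have i_ii : i -> ii.
  move=> [R0 [R0pos H]].
  have [U [cU pU lU [D [D0 dU]]]] := Dc_lt H.
  exists (D / R0); split; first by rewrite divr_ge0 // ltW.
  move=> Rr; rewrite le_eqVlt => /orP[/eqP <-|Rr0].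
    by rewrite mulr0; exact: Dc0.
  pose t := Rr / R0.
  have t0 : 0 < t by rewrite divr_gt0.
  apply: le_trans (@Dc_le _ _ _ (scU t U) _ _ _) _.
  - exact: cover_sc.
  - exact: pf_sc.
  - apply: leb_of => l /andP[l0 lR].
    have g : goodL U (l / t).
      apply: (leb_ge lU); apply/andP; split; first by rewrite divr_ge0 // ltW.
      rewrite ltr_pdivrMr //.
      by rewrite /t mulrCA divff ?gt_eqF // mulr1.
    by have := goodL_sc t0 g; rewrite mulrC divfK // gt_eqF.
  - have := cdiam_sc t0 dU; congr (_ <= _)%E; congr (_%:E).
    rewrite /t; ring.
have ii_iii : ii -> iii.
  move=> [C [C0 H]] Rr Rr0; exact: le_lt_trans (H _ Rr0) (ltry _).
have iii_iv : iii -> iv.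
  move=> H r r0.
  have [U [cU pU lU [D [D0 dU]]]] := Dc_lt (H 1 ler01).
  pose t := r / (D + 1).
  have D1 : 0 < D + 1 by lra.
  have t0 : 0 < t by rewrite divr_gt0.
  apply: lt_le_trans (@Du_ge _ _ _ (scU t U) _ _ _).
  - apply: (@lt_le_trans _ _ t%:E); first by rewrite lte_fin.
    apply: leb_of => l /andP[l0 lt].
    have g : goodL U (l / t).
      apply: (leb_ge lU); apply/andP; split; first by rewrite divr_ge0 // ltW.
      by rewrite ltr_pdivrMr // mul1r.
    by have := goodL_sc t0 g; rewrite mulrC divfK // gt_eqF.
  - exact: cover_sc.
  - exact: pf_sc.
  - apply: le_trans (cdiam_sc t0 dU) _; rewrite lee_fin /t mulrAC ler_pdivrMr //.
    by rewrite ler_wpM2l ?ltW //; lra.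
have iv_iii : iv -> iii.
  move=> H Rr Rr0.
  have [U [cU pU dU lU]] := Du_gt (H 1 ltr01).
  have [d [gd d0]] := leb_gt lU.
  pose t := (Rr + 1) / d.
  have t0 : 0 < t by rewrite divr_gt0 //; lra.
  apply: le_lt_trans (@Dc_le _ _ _ (scU t U) _ _ _) _.
  - exact: cover_sc.
  - exact: pf_sc.
  - apply: leb_ub; apply: (goodL_down (goodL_sc t0 gd)).
    rewrite Rr0 /= /t divfK ?gt_eqF //; lra.
  - exact: le_lt_trans (cdiam_sc t0 dU) (ltry _).
have iii_i : iii -> i.
  by move=> h; exists 1; split; [exact: ltr01 | apply: h; exact: ler01].
split; split.
- exact: i_ii.
- by move=> h; apply: iii_i; apply: ii_iii.
- exact: ii_iii.
- by move=> h; apply: i_ii; apply: iii_i.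
- exact: iii_iv.
- exact: iv_iii.
Qed.
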